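(* Let $0<\varpi<2$, $0\le\beta_e\le1$ and $\epsilon>0$. Let $X$ be binary with distribution $(p,1-p)$, $p\in[0,1/2]$, and $Y$ the output of the binary erasure channel $p(y\mid x)=\begin{pmatrix}1-\beta_e&0&\beta_e\\ 0&1-\beta_e&\beta_e\end{pmatrix}$. Consider $$\max_{p\in[0,1/2]} I(X;Y)\quad\text{subject to}\quad L(\varpi,X)-L(\varpi,X\mid Y)\le\epsilon.$$ Let $C_{\beta_e}=(1-\beta_e)(e^{\varpi/2}-1)$. Then the optimal value equals $1-\beta_e$ if $\epsilon\ge C_{\beta_e}$, and equals $(1-\beta_e)H(p_e)$ if $0<\epsilon\le C_{\beta_e}$, where $p_e\in[0,1/2]$ is the solution of $(1-\beta_e)\big(pe^{\varpi(1-p)}+(1-p)e^{\varpi p}-1\big)=\epsilon$.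
   Context: MIM: $L(\varpi,X)=\sum_i p(x_i)e^{\varpi(1-p(x_i))}$. CMIM: $L(\varpi,X\mid Y)=\sum_{j:\,p(y_j)>0}p(y_j)\sum_i p(x_i\mid y_j)e^{\varpi(1-p(x_i\mid y_j))}$, where the joint law is $p(x_i)p(y_j\mid x_i)$ and $p(x_i\mid y_j)=p(x_i)p(y_j\mid x_i)/p(y_j)$. $I(X;Y)$ denotes mutual information in bits, and $H(q)=-q\log_2 q-(1-q)\log_2(1-q)$ is the binary entropy function. *)

(* Defs.v *)
From Stdlib Require Import Reals.
Open Scope R_scope.

Fixpoint rsum (n : nat) (f : nat -> R) : R :=
  match n with
  | O => 0
  | S m => rsum m f + f m
  end.

Definition log2 (x : R) : R := ln x / ln 2.

Definition xlog2x (x : R) : R := if Rlt_dec 0 x then x * log2 x else 0.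

Definition Hb (q : R) : R := - xlog2x q - xlog2x (1 - q).

(* A finite input distribution px on {0..nx-1} and channel W i j = p(y_j | x_i)
   on outputs {0..ny-1}. *)
Definition py (nx : nat) (px : nat -> R) (W : nat -> nat -> R) (j : nat) : R :=
  rsum nx (fun i => px i * W i j).

Definition post (nx : nat) (px : nat -> R) (W : nat -> nat -> R) (i j : nat) : R :=
  px i * W i j / py nx px W j.

Definition MIM (w : R) (nx : nat) (px : nat -> R) : R :=
  rsum nx (fun i => px i * exp (w * (1 - px i))).

Definition CMIM (w : R) (nx ny : nat) (px : nat -> R) (W : nat -> nat -> R) : R :=
  rsum ny (fun j =>
    if Rlt_dec 0 (py nx px W j) then
      py nx px W j *
      rsum nx (fun i => post nx px W i j * exp (w * (1 - post nx px W i j)))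
    else 0).

Definition MI (nx ny : nat) (px : nat -> R) (W : nat -> nat -> R) : R :=
  rsum nx (fun i => rsum ny (fun j =>
    if Rlt_dec 0 (px i * W i j) then
      px i * W i j * log2 (px i * W i j / (px i * py nx px W j))
    else 0)).

Definition bin_px (p : R) (i : nat) : R :=
  match i with O => p | _ => 1 - p end.

(* binary erasure channel, outputs 0, 1, erasure (index 2) *)
Definition bec (b : R) (i j : nat) : R :=
  match i, j with
  | O, O => 1 - b
  | O, 1%nat => 0
  | 1%nat, O => 0
  | 1%nat, 1%nat => 1 - b
  | _, _ => b
  end.

Definition feasible (w b eps p : R) : Prop :=
  0 <= p <= 1/2 /\
  MIM w 2 (bin_px p) - CMIM w 2 3 (bin_px p) (bec b) <= eps.

Definition is_opt_value (w b eps v : R) : Prop :=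
  (exists p, feasible w b eps p /\ MI 2 3 (bin_px p) (bec b) = v) /\
  (forall p, feasible w b eps p -> MI 2 3 (bin_px p) (bec b) <= v).

(* Main.v *)
Require Import Defs.
From Stdlib Require Import Reals Lra.
From Coquelicot Require Import Coquelicot.
Open Scope R_scope.

Definition fM (w p : R) := p*exp(w*(1-p)) + (1-p)*exp(w*p).
Definition fM' (w p : R) := exp (w*(1-p)) * (1 - w*p) - exp (w*p) * (1 - w*(1-p)).

Lemma fM_der w x : derivable_pt_lim (fM w) x (fM' w x).
Proof. apply is_derive_Reals. unfold fM, fM'. auto_derive; auto. replace (1 + - x) with (1 - x) by ring; ring. Qed.

Lemma fM'_pos w c : 0 < w < 2 -> 0 < c < 1/2 -> 0 < fM' w c.
Proof.
  intros hw hc. unfold fM'.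
  assert (E1 : exp (w*c) < exp (w*(1-c))) by (apply exp_increasing; nra).
  assert (E2 : 0 < exp (w*c)) by apply exp_pos.
  destruct (Rle_dec (1 - w*(1-c)) 0).
  - assert (0 < 1 - w*c) by nra. nra.
  - assert (1 - w*(1-c) < 1 - w*c) by nra. nra.
Qed.

Lemma fM_strict w x y : 0 < w < 2 -> 0 <= x -> x < y -> y <= 1/2 -> fM w x < fM w y.
Proof.
  intros hw hx hxy hy.
  destruct (MVT_cor2 (fM w) (fM' w) x y hxy) as [c [Hc Hc2]].
  { intros; apply fM_der. }
  assert (0 < fM' w c) by (apply fM'_pos; lra). nra.
Qed.

Lemma fM_cont w : continuity (fM w).
Proof. intro x. apply derivable_continuous_pt. exists (fM' w x). apply fM_der. Qed.

Definition hh (p : R) := -(p*ln p + (1-p)*ln(1-p))/ln 2.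
Definition hh' (p : R) := (ln (1-p) - ln p)/ln 2.

Lemma ln2_pos : 0 < ln 2.
Proof. rewrite <- ln_1. apply ln_increasing; lra. Qed.

Lemma hh_der x : 0 < x < 1 -> derivable_pt_lim hh x (hh' x).
Proof.
  intros hx. apply is_derive_Reals. unfold hh, hh'.
  assert (ln 2 <> 0) by (generalize ln2_pos; lra).
  auto_derive. repeat split; lra. replace (1 + - x) with (1 - x) by ring. field. lra.
Qed.

Lemma xlog2x_pos x : 0 < x -> xlog2x x = x * (ln x / ln 2).
Proof. intro. unfold xlog2x, log2. destruct (Rlt_dec 0 x); lra. Qed.

Lemma Hb_hh x : 0 < x < 1 -> Hb x = hh x.
Proof.
  intro. unfold Hb, hh. rewrite !xlog2x_pos by lra.
  assert (ln 2 <> 0) by (generalize ln2_pos; lra). field. auto.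
Qed.

Lemma Hb0 : Hb 0 = 0.
Proof.
  unfold Hb, xlog2x. destruct (Rlt_dec 0 0); try lra.
  destruct (Rlt_dec 0 (1-0)); try lra. unfold log2. replace (1-0) with 1 by ring.
  rewrite ln_1. unfold Rdiv. ring.
Qed.

Lemma Hb_half : Hb (1/2) = 1.
Proof.
  unfold Hb. replace (1 - 1/2) with (1/2) by field. rewrite xlog2x_pos by lra.
  replace (1/2) with (/2) by field. rewrite ln_Rinv by lra.
  assert (ln 2 <> 0) by (generalize ln2_pos; lra). field. auto.
Qed.

Lemma Hb_nonneg y : 0 < y <= 1/2 -> 0 <= Hb y.
Proof.
  intro. rewrite Hb_hh by lra. unfold hh.
  assert (ln y < 0). { rewrite <- ln_1. apply ln_increasing; lra. }
  assert (ln (1-y) < 0). { rewrite <- ln_1. apply ln_increasing; lra. }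
  generalize ln2_pos. intro.
  unfold Rdiv. apply Rmult_le_pos; [nra|]. left; apply Rinv_0_lt_compat; lra.
Qed.

Lemma Hb_mono x y : 0 <= x -> x <= y -> y <= 1/2 -> Hb x <= Hb y.
Proof.
  intros hx hxy hy.
  destruct (Req_dec x y) as [->|hne]; [lra|].
  destruct (Req_dec x 0) as [->|hx0].
  { rewrite Hb0. apply Hb_nonneg. lra. }
  rewrite !Hb_hh by lra.
  destruct (MVT_cor2 hh hh' x y) as [c [Hc Hc2]]; [lra| |].
  { intros; apply hh_der; lra. }
  assert (0 <= hh' c).
  { unfold hh'. assert (ln c < ln (1-c)) by (apply ln_increasing; lra).
    generalize ln2_pos; intro. unfold Rdiv. apply Rmult_le_pos; [lra|].
    left; apply Rinv_0_lt_compat; lra. }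
  nra.
Qed.
Lemma br (c e v : R) : (0 < c -> e = v) -> (~ 0 < c -> v = 0) ->
  (if Rlt_dec 0 c then e else 0) = v.
Proof. intros. destruct (Rlt_dec 0 c); auto; symmetry; auto. Qed.

Lemma cons_eq w b p : 0 <= b <= 1 -> 0 <= p <= 1 ->
  MIM w 2 (bin_px p) - CMIM w 2 3 (bin_px p) (bec b) = (1-b)*(fM w p - 1).
Proof.
  intros hb hp. unfold MIM, CMIM, post, py, fM; simpl.
  replace (w * (1 - (1 - p))) with (w*p) by ring.
  rewrite (br _ _ (p*(1-b))); cycle 1.
  { intro h. replace (p * (1 - b) / (0 + p * (1 - b) + (1 - p) * 0)) with 1 by (field; nra).
    replace ((1 - p) * 0 / (0 + p * (1 - b) + (1 - p) * 0)) with 0 by (field; nra).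
    replace (w*(1-1)) with 0 by ring. rewrite exp_0. ring. }
  { intro h. nra. }
  rewrite (br _ _ ((1-p)*(1-b))); cycle 1.
  { intro h. replace ((1-p) * (1 - b) / (0 + p * 0 + (1 - p) * (1-b))) with 1 by (field; nra).
    replace (p * 0 / (0 + p * 0 + (1 - p) * (1-b))) with 0 by (field; nra).
    replace (w*(1-1)) with 0 by ring. rewrite exp_0. ring. }
  { intro h. nra. }
  rewrite (br _ _ (b*(p * exp (w * (1 - p)) + (1 - p) * exp (w * p)))); cycle 1.
  { intro h. replace (p * b / (0 + p * b + (1 - p) * b)) with p by (field; nra).
    replace ((1-p) * b / (0 + p * b + (1 - p) * b)) with (1-p) by (field; nra).
    replace (w * (1 - (1 - p))) with (w*p) by ring. ring. }
  { intro h. assert (b = 0) by nra. subst. ring. }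
  ring.
Qed.

Lemma MI_eq b p : 0 <= b <= 1 -> 0 <= p <= 1 ->
  MI 2 3 (bin_px p) (bec b) = (1-b)*Hb p.
Proof.
  intros hb hp. unfold MI, py, Hb, xlog2x, log2; simpl.
  assert (L2 : ln 2 <> 0).
  { assert (0 < ln 2) by (rewrite <- ln_1; apply ln_increasing; lra). lra. }
  set (X0 := if Rlt_dec 0 p then p * (ln p / ln 2) else 0).
  set (X1 := if Rlt_dec 0 (1-p) then (1-p) * (ln (1-p) / ln 2) else 0).
  rewrite (br _ _ (-(1-b)*X0)); cycle 1.
  { intro h. assert (0 < p) by nra. unfold X0. destruct (Rlt_dec 0 p); [|lra].
    replace (p * (1 - b) / (p * (0 + p * (1 - b) + (1 - p) * 0))) with (/p) by (field; nra).
    rewrite ln_Rinv by lra. field. auto. }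
  { intro h. unfold X0. destruct (Rlt_dec 0 p); [|ring]. assert (b = 1) by nra. subst; ring. }
  rewrite (br _ _ 0); [| intro; nra | auto].
  rewrite (br _ _ 0); cycle 1.
  { intro h. replace (p * b / (p * (0 + p * b + (1 - p) * b))) with 1 by (field; nra).
    rewrite ln_1. field. auto. }
  { auto. }
  rewrite (br _ _ 0); [| intro; nra | auto].
  rewrite (br _ _ (-(1-b)*X1)); cycle 1.
  { intro h. assert (0 < 1-p) by nra. unfold X1. destruct (Rlt_dec 0 (1-p)); [|lra].
    replace ((1 - p) * (1 - b) / ((1 - p) * (0 + p * 0 + (1 - p) * (1 - b)))) with (/(1-p)) by (field; nra).
    rewrite ln_Rinv by lra. field. auto. }
  { intro h. unfold X1. destruct (Rlt_dec 0 (1-p)); [|ring]. assert (b = 1) by nra. subst; ring. }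
  rewrite (br _ _ 0); cycle 1.
  { intro h. replace ((1-p) * b / ((1-p) * (0 + p * b + (1 - p) * b))) with 1 by (field; nra).
    rewrite ln_1. field. auto. }
  { auto. }
  ring.
Qed.

Theorem proposition6 (w b eps : R)
  (hw : 0 < w < 2) (hb : 0 <= b <= 1) (he : 0 < eps) :
  let C := (1 - b) * (exp (w / 2) - 1) in
  (C <= eps -> is_opt_value w b eps (1 - b)) /\
  (eps <= C ->
     (exists pe, 0 <= pe <= 1/2 /\
        (1 - b) * (pe * exp (w * (1 - pe)) + (1 - pe) * exp (w * pe) - 1) = eps) /\
     (forall pe, 0 <= pe <= 1/2 ->
        (1 - b) * (pe * exp (w * (1 - pe)) + (1 - pe) * exp (w * pe) - 1) = eps ->
        is_opt_value w b eps ((1 - b) * Hb pe))).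
Proof.
  intro C.
  assert (Fh : fM w (1/2) = exp (w/2)).
  { unfold fM. replace (w*(1-1/2)) with (w/2) by field. replace (w*(1/2)) with (w/2) by field. ring. }
  assert (F0 : fM w 0 = 1).
  { unfold fM. rewrite Rmult_0_r, exp_0. ring. }
  split.
  - intro hC. split.
    + exists (1/2). split.
      * split; [lra|]. rewrite cons_eq by lra. rewrite Fh. unfold C in hC. lra.
      * rewrite MI_eq by lra. rewrite Hb_half. ring.
    + intros p [hp hf]. rewrite MI_eq by lra.
      assert (Hb p <= 1) by (rewrite <- Hb_half; apply Hb_mono; lra).
      nra.
  - intro hC.
    assert (hb1 : b < 1).
    { destruct (Req_dec b 1) as [->|]; [|lra]. unfold C in hC. lra. }
    split.
    + destruct (Req_dec eps C) as [hE|hE].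
      * exists (1/2). split; [lra|]. fold (fM w (1/2)). rewrite Fh. rewrite hE. reflexivity.
      * destruct (IVT (fun p => (1-b)*(fM w p - 1) - eps) 0 (1/2)) as [z [hz hz2]].
        { intro x. apply continuity_pt_minus; [|apply continuity_pt_const; intros ? ?; auto].
          apply continuity_pt_mult; [apply continuity_pt_const; intros ? ?; auto|].
          apply continuity_pt_minus; [apply fM_cont|apply continuity_pt_const; intros ? ?; auto]. }
        { lra. }
        { rewrite F0. lra. }
        { cbv beta. rewrite Fh. unfold C in hC, hE. lra. }
        exists z. split; [lra|]. fold (fM w z). lra.
    + intros pe hpe hpe2. fold (fM w pe) in hpe2. split.
      * exists pe. split; [|rewrite MI_eq by lra; reflexivity]. split; [lra|]. rewrite cons_eq by lra. lra.
      * intros p [hp hf]. rewrite cons_eq in hf by lra. rewrite MI_eq by lra.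
        assert (fM w p <= fM w pe).
        { apply (Rmult_le_reg_l (1-b)); lra. }
        assert (p <= pe).
        { destruct (Rle_dec p pe); auto.
          assert (fM w pe < fM w p) by (apply fM_strict; lra). lra. }
        assert (Hb p <= Hb pe) by (apply Hb_mono; lra).
        nra.
Qed.
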